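(* Let $f_i:\mathbb{R}^n\to(-\infty,+\infty]$ be proper, lower semicontinuous and prox-bounded with thresholds $\lambda_{f_i}>0$, $i=1,2$, and let $0<\lambda<\min\{\lambda_{f_1},\lambda_{f_2}\}$. Consider: (a) $\partial_p^\lambda f_1=\partial_p^\lambda f_2$; (b) $P_\lambda f_1=P_\lambda f_2$; (c) there is $c\in\mathbb{R}$ with $e_\lambda f_1=e_\lambda f_2+c$; (d) there is $c\in\mathbb{R}$ with $h_\lambda f_1=h_\lambda f_2+c$; (e) there is $c\in\mathbb{R}$ with $\overline{\operatorname{conv}}f_1=\overline{\operatorname{conv}}f_2+c$, provided $\operatorname{conv}f_i$ is proper for $i=1,2$. Then (a)$\Leftrightarrow$(b)$\Rightarrow$(c)$\Leftrightarrow$(d), and (a)$\Rightarrow$(e).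
   Context: $e_\lambda f(x):=\inf_y\{f(y)+\frac1{2\lambda}\|y-x\|^2\}$, $P_\lambda f(x):=\operatorname{argmin}_y\{f(y)+\frac1{2\lambda}\|y-x\|^2\}$; prox-bounded with threshold $\lambda_f=\sup\{\lambda>0:e_\lambda f(x)>-\infty\text{ for some }x\}$. $v\in\partial_p^\lambda f(x)$ iff $x\in\operatorname{dom}f$ and $f(y)\ge f(x)+\langle v,y-x\rangle-\frac1{2\lambda}\|y-x\|^2$ for all $y$. $h_\lambda f:=-e_\lambda(-e_\lambda f)$. $\operatorname{conv}f$ and $\overline{\operatorname{conv}}f$ are the convex hull and the lsc convex hull of $f$. *)

(* Defs.v *)
(* R : realType, points of R^n are row vectors 'rV[R]_n
   (with the product = Euclidean topology), functions take values in \bar R. *)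
From HB Require Import structures.
From mathcomp Require Import all_boot all_order all_algebra.
From mathcomp Require Import all_classical all_reals all_analysis.
Set Implicit Arguments. Unset Strict Implicit. Unset Printing Implicit Defensive.
Import Order.TTheory GRing.Theory Num.Theory.
Import numFieldNormedType.Exports.
Local Open Scope classical_set_scope.
Local Open Scope ring_scope.

Section Defs.
Context {R : realType} {n : nat}.
Local Notation V := 'rV[R]_n.

Definition dotp (u v : V) : R := \sum_(i < n) u ord0 i * v ord0 i.
Definition sqnorm (u : V) : R := dotp u u.

Definition qpen (lam : R) (x y : V) : R := sqnorm (y - x) / (2 * lam).

Local Open Scope ereal_scope.

Definition proper_fun (f : V -> \bar R) : Prop :=
  (forall x, f x != -oo) /\ (exists x, f x < +oo).

Definition menv (lam : R) (f : V -> \bar R) (x : V) : \bar R :=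
  ereal_inf [set f y + (qpen lam x y)%:E | y in [set: V]].

(* proximal mapping  P_lam f x = argmin_y { f y + ||y-x||^2/(2 lam) }
   (argmin in the sense of Rockafellar-Wets: empty when the inf is +oo) *)
Definition prox (lam : R) (f : V -> \bar R) (x : V) : set V :=
  [set y | f y + (qpen lam x y)%:E = menv lam f x /\ menv lam f x != +oo].

Definition prox_bounded (f : V -> \bar R) : Prop :=
  exists lam : R, (0 < lam)%R /\ exists x, menv lam f x > -oo.

Definition prox_threshold (f : V -> \bar R) : \bar R :=
  ereal_sup [set lam%:E | lam in [set lam : R | (0 < lam)%R /\
                                   exists x, menv lam f x > -oo]].

Definition psubdiff (lam : R) (f : V -> \bar R) (x : V) : set V :=
  [set v | f x < +oo /\ forall y,
     f x + (dotp v (y - x) - qpen lam x y)%:E <= f y].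

Definition hfun (lam : R) (f : V -> \bar R) (x : V) : \bar R :=
  - menv lam (fun y => - menv lam f y) x.

(* convexity of an extended-real-valued function (convexity of its epigraph) *)
Definition convex_efun (g : V -> \bar R) : Prop :=
  forall (x y : V) (a b t : R), g x <= a%:E -> g y <= b%:E ->
    (0 <= t <= 1)%R ->
    g ((1 - t) *: x + t *: y)%R <= ((1 - t) * a + t * b)%:E.

Definition convhull (f : V -> \bar R) (x : V) : \bar R :=
  ereal_sup [set g x | g in [set g : V -> \bar R | convex_efun g /\
                                                   (forall z, g z <= f z)]].

Definition cconvhull (f : V -> \bar R) (x : V) : \bar R :=
  ereal_sup [set g x | g in [set g : V -> \bar R | convex_efun g /\
                   lower_semicontinuous g /\ (forall z, g z <= f z)]].

End Defs.

(* Main.v *)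
Require Import Defs.
From HB Require Import structures.
From mathcomp Require Import all_boot all_order all_algebra.
From mathcomp Require Import all_classical all_reals all_analysis.
From mathcomp Require Import ring lra.
Import Order.TTheory GRing.Theory Num.Theory.
Import numFieldNormedType.Exports.
Local Open Scope classical_set_scope.
Local Open Scope ring_scope.


Section Vec.
Context {R : realType} {n : nat}.
Local Notation V := 'rV[R]_n.
Implicit Types u w z : V.

Lemma dotpC u w : dotp u w = dotp w u.
Proof. by apply: eq_bigr => i _; rewrite mulrC. Qed.
Lemma dotpDl u w z : dotp (u + w) z = dotp u z + dotp w z.
Proof. by rewrite /dotp -big_split; apply: eq_bigr => i _; rewrite mxE mulrDl. Qed.
Lemma dotpDr u w z : dotp z (u + w) = dotp z u + dotp z w.
Proof. by rewrite dotpC dotpDl !(dotpC z). Qed.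
Lemma dotpZl a u w : dotp (a *: u) w = a * dotp u w.
Proof. by rewrite /dotp mulr_sumr; apply: eq_bigr => i _; rewrite mxE mulrA. Qed.
Lemma dotpZr a u w : dotp w (a *: u) = a * dotp w u.
Proof. by rewrite dotpC dotpZl dotpC. Qed.
Lemma dotpNl u w : dotp (- u) w = - dotp u w.
Proof. by rewrite -scaleN1r dotpZl mulN1r. Qed.
Lemma dotpNr u w : dotp w (- u) = - dotp w u.
Proof. by rewrite dotpC dotpNl dotpC. Qed.
Lemma sqnorm_ge0 u : 0 <= sqnorm u.
Proof. by apply: sumr_ge0 => i _; rewrite -expr2 sqr_ge0. Qed.
Lemma sqnorm_eq0 u : sqnorm u = 0 -> u = 0.
Proof.
move=> /eqP; rewrite /sqnorm /dotp psumr_eq0; last by move=> i _; rewrite -expr2 sqr_ge0.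
move=> /allP H; apply/rowP => i; rewrite mxE; apply/eqP.
by have := H i (mem_index_enum i); rewrite -expr2 sqrf_eq0.
Qed.
Lemma coord_le_sqnorm u i : (u ord0 i) ^+ 2 <= sqnorm u.
Proof.
rewrite /sqnorm /dotp (bigD1 i) //= -expr2 lerDl.
by apply: sumr_ge0 => j _; rewrite -expr2 sqr_ge0.
Qed.
Lemma coord_le_norm u i : `|u ord0 i| <= `|u|.
Proof.
rewrite [leRHS]/Num.norm /= mx_normrE; apply/bigmax_geP; right => /=.
by exists (ord0, i).
Qed.
Lemma norm_le_coord u (B : R) : 0 <= B -> (forall i, `|u ord0 i| <= B) -> `|u| <= B.
Proof.
move=> B0 H; rewrite [leLHS]/Num.norm /= mx_normrE; apply/bigmax_leP; split => //.
by move=> [i j] _ /=; rewrite (ord1 i); exact: H.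
Qed.
Lemma norm_sq_le u : `|u| ^+ 2 <= sqnorm u.
Proof.
have [->|] := eqVneq `|u| 0; first by rewrite expr0n /= sqnorm_ge0.
rewrite [X in X != _]/Num.norm /= => /mx_norm_neq0 [[i j] /= H].
rewrite [X in X ^+ 2 <= _]/Num.norm /= H.
by rewrite (ord1 i) real_normK ?num_real // coord_le_sqnorm.
Qed.
End Vec.


Section Env.
Context {R : realType} {n : nat}.
Local Notation V := 'rV[R]_n.
Implicit Types (u w x y z : V) (f g : V -> \bar R).

Lemma sqnormN u : sqnorm (- u) = sqnorm u.
Proof. by rewrite /sqnorm dotpNl dotpNr opprK. Qed.
Lemma sqnormD u w : sqnorm (u + w) = sqnorm u + 2 * dotp u w + sqnorm w.
Proof. rewrite /sqnorm !dotpDl !dotpDr (dotpC w u); ring. Qed.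
Lemma sqnormZ a u : sqnorm (a *: u) = a ^+ 2 * sqnorm u.
Proof. by rewrite /sqnorm dotpZl dotpZr mulrA -expr2. Qed.
Lemma qpenC lam x y : qpen lam x y = qpen lam y x.
Proof. by rewrite /qpen -(sqnormN (x - y)) opprB. Qed.

Local Open Scope ereal_scope.

Lemma oppe_addr (X : \bar R) (r : R) : - (X + r%:E) = - X - r%:E.
Proof. by case: X => [x| |] //=; rewrite opprD. Qed.
Lemma oppe_subr (X : \bar R) (r : R) : - (X - r%:E) = - X + r%:E.
Proof. by case: X => [x| |] //=; rewrite opprB addrC. Qed.
Lemma sube_oppr (X : \bar R) (r : R) : X - (- r)%:E = X + r%:E.
Proof. by case: X => [x| |] //=; rewrite opprK. Qed.
Lemma adde_subK (X : \bar R) (r : R) : X - r%:E + r%:E = X.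
Proof. by case: X => //= x; rewrite -EFinD subrK. Qed.
Lemma adde_addK (X : \bar R) (r : R) : X + r%:E - r%:E = X.
Proof. by case: X => //= x; rewrite -EFinD addrK. Qed.
Lemma lee_addr2 (X Y : \bar R) (r : R) : (X + r%:E <= Y + r%:E) = (X <= Y).
Proof. by case: X; case: Y => //= *; rewrite ?lee_fin ?lerD2r ?leey ?leNye. Qed.
Lemma eadd_real_le (X Y : \bar R) (a b : R) :
  (X + a%:E <= Y + b%:E) = (X + (a - b)%:E <= Y).
Proof. by rewrite -(lee_addr2 (X + (a - b)%:E) Y b) -addeA -EFinD subrK. Qed.

Lemma menv_le lam f x y : menv lam f x <= f y + (qpen lam x y)%:E.
Proof. by apply: ereal_inf_lbound; exists y. Qed.
Lemma menv_ge lam f x (a : \bar R) :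
  (forall y, a <= f y + (qpen lam x y)%:E) -> a <= menv lam f x.
Proof. by move=> H; apply: le_ereal_inf_tmp => _ [y _ <-]. Qed.

Lemma menv_shift lam f (c : R) x :
  menv lam (fun y => f y + c%:E) x = menv lam f x + c%:E.
Proof.
apply/eqP; rewrite eq_le; apply/andP; split.
  have H : menv lam (fun y => f y + c%:E) x - c%:E <= menv lam f x.
    apply: menv_ge => y; rewrite -(lee_addr2 _ _ c) adde_subK addeAC.
    exact: (menv_le lam (fun y => f y + c%:E)).
  by rewrite -[X in X <= _](adde_subK _ c) lee_addr2.
apply: menv_ge => y; rewrite addeAC lee_addr2; exact: menv_le.
Qed.

Lemma menv_monotone lam f g x : (forall y, f y <= g y) -> menv lam f x <= menv lam g x.
Proof.
move=> H; apply: menv_ge => y; apply: le_trans (menv_le _ _ _ y) _.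
by rewrite lee_addr2.
Qed.

Lemma hfun_ge lam f x y : menv lam f y - (qpen lam x y)%:E <= hfun lam f x.
Proof.
rewrite /hfun leeNr oppe_subr; exact: (menv_le lam (fun y => - menv lam f y)).
Qed.

Lemma hfun_le lam f x : hfun lam f x <= f x.
Proof.
rewrite /hfun leeNl; apply: menv_ge => y.
have H := menv_le lam f y x; rewrite (qpenC lam y x) in H.
have H2 : - f x - (qpen lam x y)%:E <= - menv lam f y by rewrite -oppe_addr leeN2.
rewrite -(adde_subK (- f x) (qpen lam x y)) (lee_addr2 (- f x - (qpen lam x y)%:E) (- menv lam f y) (qpen lam x y)); exact: H2.
Qed.

Lemma menv_hfun lam f : menv lam (hfun lam f) = menv lam f.
Proof.
apply/funext => x; apply/eqP; rewrite eq_le; apply/andP; split.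
  by apply: menv_monotone => y; exact: hfun_le.
apply: menv_ge => y.
have := leeD2r (qpen lam y x)%:E (hfun_ge lam f y x).
by rewrite adde_subK (qpenC lam y x).
Qed.

Lemma C_to_D lam f1 f2 (c : R) :
  (forall x, menv lam f1 x = menv lam f2 x + c%:E) ->
  forall x, hfun lam f1 x = hfun lam f2 x + c%:E.
Proof.
move=> H x; rewrite /hfun.
have -> : (fun y => - menv lam f1 y) = (fun y => - menv lam f2 y + (- c)%:E).
  by apply/funext => y; rewrite H oppe_addr.
by rewrite menv_shift oppe_addr sube_oppr.
Qed.

Lemma D_to_C lam f1 f2 (c : R) :
  (forall x, hfun lam f1 x = hfun lam f2 x + c%:E) ->
  forall x, menv lam f1 x = menv lam f2 x + c%:E.
Proof.
move=> H x; rewrite -(menv_hfun lam f1) -(menv_hfun lam f2).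
have -> : hfun lam f1 = (fun y => hfun lam f2 y + c%:E) by apply/funext.
by rewrite menv_shift.
Qed.
End Env.


Section AB.
Context {R : realType} {n : nat}.
Local Notation V := 'rV[R]_n.
Implicit Types (u w x y z : V) (f g : V -> \bar R).

Lemma qpen_ident (lam : R) x y z : lam != 0 ->
  dotp (lam^-1 *: (z - x)) (y - x) - qpen lam x y = qpen lam z x - qpen lam z y.
Proof.
move=> l0; rewrite /qpen.
have -> : y - z = (y - x) + (x - z) by rewrite addrA subrK.
rewrite (sqnormD (y - x) (x - z)) dotpZl -(opprB x z) dotpNl (dotpC (x - z)).
by field.
Qed.

Local Open Scope ereal_scope.

Lemma prox_psub (lam : R) f x z : (0 < lam)%R -> (forall y, f y != -oo) ->
  prox lam f z x <-> psubdiff lam f x (lam^-1 *: (z - x)).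
Proof.
move=> l0 fN; have l0' : lam != 0%R by rewrite gt_eqF.
split.
- move=> [Hm Hy]; split.
    rewrite ltey; apply: contra Hy => /eqP fx; rewrite -Hm fx.
    by [].
  move=> y; rewrite qpen_ident // -eadd_real_le Hm; exact: menv_le.
- move=> [fx Hy].
  have Heq : f x + (qpen lam z x)%:E = menv lam f z.
    apply/eqP; rewrite eq_le menv_le andbT; apply: menv_ge => y.
    by rewrite eadd_real_le -qpen_ident //; exact: Hy.
  split => //; rewrite -Heq.
  move: (fN x) fx; case: (f x) => //.
Qed.

Lemma scale_back (lam : R) x v : lam != 0%R -> lam^-1 *: ((x + lam *: v) - x) = v.
Proof. by move=> l0; rewrite addrC addKr scalerA mulVf // scale1r. Qed.

Lemma A_iff_B (lam : R) f1 f2 : (0 < lam)%R -> (forall y, f1 y != -oo) ->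
  (forall y, f2 y != -oo) ->
  (forall x, psubdiff lam f1 x = psubdiff lam f2 x) <->
  (forall x, prox lam f1 x = prox lam f2 x).
Proof.
move=> l0 h1 h2; have l0' : lam != 0%R by rewrite gt_eqF.
split => H z.
  apply/seteqP; split => p /=.
    by move=> /(prox_psub _ _ _ _ l0 h1); rewrite H => /(prox_psub _ _ _ _ l0 h2).
  by move=> /(prox_psub _ _ _ _ l0 h2); rewrite -H => /(prox_psub _ _ _ _ l0 h1).
apply/seteqP; split => v /=.
  rewrite -{1}(scale_back lam z v l0') => /(prox_psub _ _ _ _ l0 h1).
  by rewrite H => /(prox_psub _ _ _ _ l0 h2); rewrite scale_back.
rewrite -{1}(scale_back lam z v l0') => /(prox_psub _ _ _ _ l0 h2).
by rewrite -H => /(prox_psub _ _ _ _ l0 h1); rewrite scale_back.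
Qed.
End AB.


Section Topo.
Context {R : realType} {n : nat}.
Local Notation V := 'rV[R]_n.
Implicit Types (u w x y z : V) (f g : V -> \bar R).

Lemma dotp_abs_le u a : `|dotp u a| <= `|u| * \sum_i `|a ord0 i|.
Proof.
rewrite /dotp mulr_sumr; apply: le_trans (ler_norm_sum _ _ _) _.
apply: ler_sum => i _; rewrite normrM ler_wpM2r //; exact: coord_le_norm.
Qed.

Lemma ball_norm_lt z (d : R) w : ball z d w -> `|z - w| < d.
Proof. by rewrite -ball_normE. Qed.

Lemma qpen_near (mu : R) x z (e : R) : 0 < mu -> 0 < e ->
  exists2 W, nbhs z W & forall w, W w -> qpen mu x z - e < qpen mu x w.
Proof.
move=> m0 e0; set S := \sum_i `|(z - x) ord0 i|.
have S0 : 0 <= S by apply: sumr_ge0.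
exists (ball z (e * mu / (S + 1))).
  by apply: nbhsx_ballx; apply: divr_gt0 => //; [exact: mulr_gt0 | lra].
move=> w /ball_norm_lt Hw.
have Hw' : `|w - z| < e * mu / (S + 1) by rewrite -normrN opprB.
have E : qpen mu x w - qpen mu x z =
   (sqnorm (w - z) + 2 * dotp (w - z) (z - x)) / (2 * mu).
  rewrite /qpen.
  have -> : w - x = (w - z) + (z - x) by rewrite addrA subrK.
  rewrite sqnormD; field; lra.
have Hd := dotp_abs_le (w - z) (z - x); rewrite -/S in Hd.
have Hsq := sqnorm_ge0 (w - z).
have H1 : `|w - z| * S <= e * mu / (S + 1) * S.
  by rewrite ler_wpM2r // ltW.
have H2 : e * mu / (S + 1) * S < e * mu.
  have -> : e * mu / (S + 1) * S = (e * mu) * (S / (S + 1)) by rewrite mulrAC -mulrA.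
  rewrite gtr_pMr ?mulr_gt0 // ltr_pdivrMr; lra.
have H3 : - (e * mu) < dotp (w - z) (z - x).
  have Hd2 : `|dotp (w - z) (z - x)| < e * mu.
    by apply: le_lt_trans Hd _; apply: le_lt_trans H1 H2.
  by move: Hd2; rewrite ltr_norml => /andP[].
suff : - e < qpen mu x w - qpen mu x z by lra.
rewrite E ltr_pdivlMr; last lra.
lra.
Qed.

Local Open Scope ereal_scope.

Lemma lte_add_real (X : \bar R) (a b c : R) : b%:E < X -> (a <= b + c)%R ->
  a%:E < X + c%:E.
Proof.
case: X => [x| |] //= H1 H2; last by rewrite ltry.
by rewrite -EFinD lte_fin; rewrite lte_fin in H1; lra.
Qed.

Lemma lsc_addq G (mu : R) x : (0 < mu)%R -> lower_semicontinuous G ->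
  lower_semicontinuous (fun z => G z + (qpen mu x z)%:E).
Proof.
move=> m0 lG z a H.
have [b [Hb1 Hb2]] : exists b : R, (a - qpen mu x z < b)%R /\ b%:E < G z.
  move: H; case: (G z) => [g| |] //.
  - rewrite -EFinD lte_fin => H; exists ((a - qpen mu x z + g) / 2)%R; split;
      [|rewrite lte_fin]; lra.
  - by move=> _; exists (a - qpen mu x z + 1)%R; split; [lra|exact: ltry].
have [W1 nW1 HW1] := lG z b Hb2.
have [W2 nW2 HW2] := @qpen_near mu x z (b - (a - qpen mu x z)) m0 (ltac:(lra)).
exists (W1 `&` W2); first exact: filterI.
move=> w [/HW1 h1 /HW2 h2]; apply: lte_add_real h1 _; lra.
Qed.

Lemma abs_le_1sq (w : R) : (`|w| <= 1 + w ^+ 2)%R.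
Proof.
have h := sqr_ge0 (`|w| - 1)%R; have e : (`|w| ^+ 2 = w ^+ 2)%R by rewrite real_normK // num_real.
have h2 := sqr_ge0 w.
nra.
Qed.

Lemma exists_min G x (mu A eta : R) : (0 < mu)%R -> (eta < (2 * mu)^-1)%R ->
  lower_semicontinuous G -> (exists z1, G z1 < +oo) ->
  (forall z, (A - eta * sqnorm (z - x))%:E <= G z) ->
  exists p, forall z, G p + (qpen mu x p)%:E <= G z + (qpen mu x z)%:E.
Proof.
move=> m0 he lG [z1 Hz1] lb.
set phi := fun z => G z + (qpen mu x z)%:E.
have lphi : lower_semicontinuous phi := @lsc_addq G mu x m0 lG.
set k := ((2 * mu)^-1 - eta)%R.
have k0 : (0 < k)%R by rewrite /k; lra.
have qE : forall z, qpen mu x z = (sqnorm (z - x) * (2 * mu)^-1)%R by [].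
have philb : forall z, (A + k * sqnorm (z - x))%:E <= phi z.
  move=> z; rewrite /phi qE; have := lb z.
  case: (G z) => [g| |] H; [|by rewrite leey|by move: H; rewrite leeNy_eq].
  move: H; rewrite -EFinD !lee_fin /k => H.
  have -> : (((2 * mu)^-1 - eta) * sqnorm (z - x) =
     sqnorm (z - x) * (2 * mu)^-1 - eta * sqnorm (z - x))%R by ring.
  lra.
clearbody k.
have phiN : forall z, phi z != -oo.
  by move=> z; rewrite -ltNye; apply: lt_le_trans (philb z); rewrite ltNyr.
have phi1 : phi z1 \is a fin_num.
  rewrite fin_numE phiN /=; rewrite /phi -ltey.
  by apply: lte_add_pinfty => //; rewrite ltry.
set M := fine (phi z1).
have phiM : phi z1 = M%:E by rewrite fineK.
set D := [set a : R | (a <= M)%R /\ exists z, phi z <= a%:E].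
set B := fun a : R => [set z | phi z <= a%:E].
have DM : D M by split => //; exists z1; rewrite phiM.
have FF : Filter (filter_from D B).
  apply: filter_from_filter; first by exists M.
  move=> i j [Hi [zi Hzi]] [Hj [zj Hzj]].
  have [ij|ji] := leP i j.
  - exists i; first by split => //; exists zi.
    by move=> w Hw; split => //; apply: (le_trans Hw); rewrite lee_fin.
  - exists j; first by split => //; exists zj.
    by move=> w Hw; split => //; apply: (le_trans Hw); rewrite lee_fin ltW.
have PF : ProperFilter (filter_from D B).
  by apply: filter_from_proper => // i [_ [zi Hzi]]; exists zi.
have cK : compact (B M).
  apply: bounded_closed_compact.
    set T := ((M - A) / k)%R.
    rewrite /= /bounded_near; exists (`|x| + (1 + T))%R; split; first exact: num_real.
    move=> M' HM' z Bz; apply: le_trans (ltW HM').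
    have Hsq : (sqnorm (z - x) <= T)%R.
      have := le_trans (philb z) Bz; rewrite lee_fin /T => H.
      by rewrite ler_pdivlMr // mulrC lerBrDl.
    apply: norm_le_coord.
      by have := sqnorm_ge0 (z - x); have := normr_ge0 x; lra.
    move=> i.
    have -> : z ord0 i = (x ord0 i + (z - x) ord0 i)%R by rewrite !mxE addrCA subrr addr0.
    apply: le_trans (ler_normD _ _) _; apply: lerD; first exact: coord_le_norm.
    apply: le_trans (abs_le_1sq _) _; rewrite lerD2l.
    exact: le_trans (coord_le_sqnorm _ _) Hsq.
  have -> : B M = ~` [set z | M%:E < phi z].
    by apply/seteqP; split => z; rewrite /B /= leNgt => /negP.
  apply: open_closedC; exact: (proj1 (lower_semicontinuousP phi) lphi M).
have FK : filter_from D B (B M) by exists M.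
have [p [Kp clp]] := cK _ PF FK.
have pD : forall a, D a -> phi p <= a%:E.
  move=> a Da; rewrite leNgt; apply/negP => ltap.
  have [W nW HW] := lphi p a ltap.
  have FBa : filter_from D B (B a) by exists a.
  have [w [Bw Ww]] := clp _ _ FBa nW.
  by have := HW w Ww; rewrite ltNge Bw.
exists p => z; change (phi p <= phi z).
have [Hz|Hz] := leP (phi z) M%:E.
  have fz : phi z \is a fin_num.
    rewrite fin_numE phiN /= -ltey; apply: le_lt_trans Hz _; exact: ltry.
  rewrite -(fineK fz); apply: pD; split; first by rewrite -lee_fin fineK.
  by exists z; rewrite fineK.
by apply: le_trans (ltW Hz); exact: pD.
Qed.
End Topo.


Section BC.
Context {R : realType} {n : nat}.
Local Notation V := 'rV[R]_n.
Implicit Types (u w x y z : V) (f g : V -> \bar R).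

Lemma qpen_step (lam : R) x d p p' : lam != 0 ->
  (qpen lam (x + d) p - qpen lam x p) - (qpen lam (x + d) p' - qpen lam x p')
  = dotp d (p' - p) / lam.
Proof.
move=> l0; rewrite /qpen.
have e1 : forall q, q - (x + d) = (q - x) + (- d) by move=> q; rewrite opprD addrA.
rewrite !e1 !sqnormD !sqnormN !dotpNr !dotpDl !dotpDr !dotpNl !dotpNr (dotpC p d) (dotpC p' d).
field; by rewrite ?mulf_neq0 // pnatr_eq0.
Qed.

Lemma small_zero (t K : R) : (forall N : nat, (0 < N)%N -> `|t| <= K / N%:R) -> t = 0.
Proof.
move=> H; apply/eqP; apply: contraT => t0.
have ta : 0 < `|t| by rewrite normr_gt0.
have K0 : 0 <= K by have := H 1%N isT; rewrite divr1; apply: le_trans.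
set N := Num.bound (K / `|t|).
have HN := archi_boundP (divr_ge0 K0 (ltW ta)).
have N0 : (0 < N)%N.
  by rewrite lt0n; apply/negP => /eqP E; move: HN; rewrite -/N E /= ltNge divr_ge0 // ltW.
have := H N N0; rewrite ler_pdivlMr ?ltr0n // => H2.
move: HN; rewrite -/N ltr_pdivrMr // => H3.
lra.
Qed.

Lemma dotp0r u : dotp u 0 = 0.
Proof. by rewrite /dotp big1 // => i _; rewrite mxE mulr0. Qed.

Lemma const_of_sel (lam : R) (E1 E2 : V -> R) (P : V -> V) : 0 < lam ->
  (forall x z, E1 x - E1 z <= qpen lam x (P z) - qpen lam z (P z)) ->
  (forall x z, E2 x - E2 z <= qpen lam x (P z) - qpen lam z (P z)) ->
  forall a b, E1 b - E2 b = E1 a - E2 a.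
Proof.
move=> l0 H1 H2 a b; have l0' : lam != 0 by rewrite gt_eqF.
suff : E1 b - E2 b - (E1 a - E2 a) = 0 by move=> h; apply/eqP; rewrite -subr_eq0 h.
apply: (@small_zero _ (dotp (b - a) (P b - P a) / lam)) => N N0.
set d := N%:R^-1 *: (b - a).
set xk := fun k : nat => a + k%:R *: d.
have step : forall k, `|(E1 (xk k.+1) - E2 (xk k.+1)) - (E1 (xk k) - E2 (xk k))|
    <= dotp d (P (xk k.+1) - P (xk k)) / lam.
  move=> k; have ex : xk k.+1 = xk k + d.
    by rewrite /xk mulrS scalerDl scale1r addrA addrAC.
  have Hs := qpen_step lam (xk k) d (P (xk k)) (P (xk k.+1)) l0'.
  have h1 := H1 (xk k.+1) (xk k); have h2 := H2 (xk k.+1) (xk k).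
  have h3 := H1 (xk k) (xk k.+1); have h4 := H2 (xk k) (xk k.+1).
  rewrite ex in h1 h2 h3 h4 Hs *.
  rewrite -Hs ler_norml; apply/andP; split; lra.
have chain : forall k, `|(E1 (xk k) - E2 (xk k)) - (E1 a - E2 a)|
    <= dotp d (P (xk k) - P a) / lam.
  elim => [|k IH].
    have -> : xk 0%N = a by rewrite /xk scale0r addr0.
    by rewrite !subrr normr0 dotp0r mul0r.
  have e : (E1 (xk k.+1) - E2 (xk k.+1)) - (E1 a - E2 a) =
    ((E1 (xk k.+1) - E2 (xk k.+1)) - (E1 (xk k) - E2 (xk k))) +
    ((E1 (xk k) - E2 (xk k)) - (E1 a - E2 a)) by ring.
  have e2 : P (xk k.+1) - P a = (P (xk k.+1) - P (xk k)) + (P (xk k) - P a).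
    by rewrite addrA subrK.
  rewrite e e2 dotpDr mulrDl; apply: le_trans (ler_normD _ _) _.
  by apply: lerD; [exact: step | exact: IH].
have xN : xk N = b.
  by rewrite /xk /d scalerA mulfV ?scale1r ?pnatr_eq0 -?lt0n // addrC subrK.
have := chain N; rewrite xN /d dotpZl => h; apply: le_trans h _.
rewrite le_eqVlt; apply/orP; left; apply/eqP; field.
by rewrite l0' pnatr_eq0 -lt0n N0.
Qed.

Local Open Scope ereal_scope.

Lemma sel_facts (lam : R) f (P : V -> V) : (forall y, f y != -oo) ->
  (forall x, prox lam f x (P x)) ->
  (forall x, menv lam f x \is a fin_num) /\
  (forall x z, (fine (menv lam f x) - fine (menv lam f z) <=
                qpen lam x (P z) - qpen lam z (P z))%R).
Proof.
move=> fN HP.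
have fin : forall z, f (P z) \is a fin_num /\ menv lam f z \is a fin_num.
  move=> z; have [e ne] := HP z.
  have fP : f (P z) \is a fin_num.
    rewrite fin_numE fN /=; apply: contra ne => /eqP h.
    by rewrite -e h.
  by split => //; rewrite -e -(fineK fP).
split; first by move=> x; case: (fin x).
move=> x z; have [fP mz] := fin z; have [_ mx] := fin x.
have [e _] := HP z.
have h := menv_le lam f x (P z).
rewrite -(fineK fP) -(fineK mx) -EFinD lee_fin in h.
rewrite -(fineK fP) -EFinD in e.
have e' : fine (menv lam f z) = (fine (f (P z)) + qpen lam z (P z))%R.
  by rewrite -e.
lra.
Qed.

Lemma BtoC (lam : R) f1 f2 : (0 < lam)%R -> (forall y, f1 y != -oo) ->
  (forall y, f2 y != -oo) ->
  (forall x, exists p, prox lam f1 x p) ->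
  (forall x, prox lam f1 x = prox lam f2 x) ->
  exists c : R, forall x, menv lam f1 x = menv lam f2 x + c%:E.
Proof.
move=> l0 h1 h2 Hex H.
have [P HP] := choice Hex.
have HP2 : forall x, prox lam f2 x (P x) by move=> x; rewrite -H.
have [fin1 K1] := @sel_facts lam f1 P h1 HP.
have [fin2 K2] := @sel_facts lam f2 P h2 HP2.
have C := @const_of_sel lam _ _ P l0 K1 K2 0.
exists (fine (menv lam f1 0) - fine (menv lam f2 0))%R => x.
rewrite -(C x) -(fineK (fin1 x)) -(fineK (fin2 x)) -EFinD.
by congr (_%:E); ring.
Qed.
End BC.


Section Thr.
Context {R : realType} {n : nat}.
Local Notation V := 'rV[R]_n.
Implicit Types (u w x y z : V) (f g : V -> \bar R).

Lemma dotp_young (e : R) u w : 0 < e -> 2 * dotp u w <= e * sqnorm u + e^-1 * sqnorm w.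
Proof.
move=> e0; have h := sqnorm_ge0 (e *: u - w).
rewrite sqnormD sqnormN sqnormZ dotpNr dotpZl in h.
have E : e * (e^-1 * sqnorm w) = sqnorm w by rewrite mulrA mulfV ?gt_eqF // mul1r.
rewrite -(ler_pM2l e0) mulrDr E.
have -> : e * (e * sqnorm u) = e ^+ 2 * sqnorm u by rewrite mulrA -expr2.
have -> : e * (2 * dotp u w) = 2 * (e * dotp u w) by rewrite mulrCA.
lra.
Qed.

Lemma sqnorm_shift (e : R) u w : 0 < e ->
  sqnorm (u + w) <= (1 + e) * sqnorm u + (1 + e^-1) * sqnorm w.
Proof.
move=> e0; rewrite sqnormD.
have := dotp_young e u w e0; lra.
Qed.

Local Open Scope ereal_scope.

Lemma le_sub_real (a b : R) (Y : \bar R) : a%:E <= Y + b%:E -> (a - b)%:E <= Y.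
Proof.
case: Y => [y| |] H; first by rewrite lee_fin; rewrite -EFinD lee_fin in H; lra.
  exact: leey.
by move: H; rewrite addNye leeNy_eq.
Qed.

Lemma qlb_shift G (A eta eta' : R) x0 x : (0 < eta)%R -> (eta < eta')%R ->
  (forall z, (A - eta * sqnorm (z - x0))%:E <= G z) ->
  exists A' : R, forall z, (A' - eta' * sqnorm (z - x))%:E <= G z.
Proof.
move=> e0 ee H; set e := (eta' / eta - 1)%R.
have e1 : (0 < e)%R by rewrite /e subr_gt0 ltr_pdivlMr // mul1r.
exists (A - eta * (1 + e^-1) * sqnorm (x - x0))%R => z.
apply: le_trans (H z); rewrite lee_fin.
have : sqnorm (z - x0) = sqnorm ((z - x) + (x - x0)) by rewrite addrA subrK.
move=> ->; have h := @sqnorm_shift e (z - x) (x - x0) e1.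
have he : (eta * (1 + e) = eta')%R by rewrite /e addrC subrK mulrC mulfVK ?gt_eqF.
have h2 := ler_wpM2l (ltW e0) h.
rewrite mulrDr !mulrA he in h2.
lra.
Qed.

Lemma thr_qlb (lam : R) f : lam%:E < prox_threshold f -> proper_fun f ->
  exists lam' A x0, (lam < lam')%R /\
    forall z, (A - (2 * lam')^-1 * sqnorm (z - x0))%:E <= f z.
Proof.
move=> /ereal_sup_gt [_ [l [l0 [x0 Hx0]] <-]] ltl [fN [xd fd]].
have fin : menv l f x0 \is a fin_num.
  rewrite fin_numE -ltNye Hx0 /= -ltey.
  apply: le_lt_trans (menv_le l f x0 xd) _.
  by apply: lte_add_pinfty => //; exact: ltry.
exists l, (fine (menv l f x0)), x0; split; first by rewrite -lte_fin.
move=> z; have h := menv_le l f x0 z; rewrite -(fineK fin) in h.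
have := le_sub_real _ _ _ h; rewrite /qpen mulrC; exact.
Qed.

Lemma prox_ne (lam : R) f : (0 < lam)%R -> lower_semicontinuous f -> proper_fun f ->
  lam%:E < prox_threshold f -> forall x, exists p, prox lam f x p.
Proof.
move=> l0 lf pf lt x; have [l [A [x0 [ll H]]]] := thr_qlb lam f lt pf.
have [fN [xd fd]] := pf.
have l0' : (0 < l)%R by lra.
have e0 : (0 < (2 * l)^-1)%R by rewrite invr_gt0; lra.
have ee : ((2 * l)^-1 < (2 * lam)^-1)%R.
  by rewrite ltf_pV2 ?posrE; lra.
set eta' := (((2 * l)^-1 + (2 * lam)^-1) / 2)%R.
have [A' HA'] := @qlb_shift f A ((2 * l)^-1) eta' x0 x e0 ltac:(rewrite /eta'; lra) H.
have [p Hp] := exists_min f x lam A' eta' l0 ltac:(rewrite /eta'; lra) lf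
  (ex_intro _ xd fd) HA'.
exists p; split.
  apply/eqP; rewrite eq_le; apply/andP; split; last exact: menv_le.
  by apply: menv_ge => z; exact: Hp.
rewrite -ltey; apply: le_lt_trans (menv_le lam f x xd) _.
by apply: lte_add_pinfty; [exact: fd | exact: ltry].
Qed.
End Thr.


Section Conv.
Context {R : realType} {n : nat}.
Local Notation V := 'rV[R]_n.
Implicit Types (u w x y z : V) (f g : V -> \bar R).

Lemma small_pos (D S : R) : 0 <= S -> (forall t, 0 < t -> t <= 1 -> D <= t * S) -> D <= 0.
Proof.
move=> S0 H; rewrite leNgt; apply/negP => D0.
set t := D / (D + S + 1).
have den : 0 < D + S + 1 by lra.
have t0 : 0 < t by rewrite /t divr_gt0.
have t1 : t <= 1 by rewrite /t ler_pdivrMr // mul1r; lra.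
have := H t t0 t1; rewrite /t mulrAC ler_pdivlMr // => h.
nra.
Qed.

Local Open Scope ereal_scope.

Lemma le_from_reals (X : \bar R) (L : R) : (forall b : R, X <= b%:E -> (L <= b)%R) -> L%:E <= X.
Proof.
case: X => [x| |] H; last by have := H (L - 1)%R (leNye _); move=> h; exfalso; lra.
  by rewrite lee_fin; apply: H.
exact: leey.
Qed.

Lemma conv_upgrade G p (v : V) (mu : R) : (0 < mu)%R -> convex_efun G ->
  G p \is a fin_num -> (forall z, G z != -oo) ->
  (forall z, G p + (dotp v (z - p) - sqnorm (z - p) / (2 * mu))%:E <= G z) ->
  forall z, G p + (dotp v (z - p))%:E <= G z.
Proof.
move=> m0 cG fp GN H z.
case Gz: (G z) => [b| |]; last by move: (GN z); rewrite Gz.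
  2: exact: leey.
rewrite -(fineK fp) -EFinD lee_fin.
set gp := fine (G p); set dv := dotp v (z - p); set S := (sqnorm (z - p) / (2 * mu))%R.
have S0 : (0 <= S)%R by rewrite /S divr_ge0 ?sqnorm_ge0 //; lra.
suff : (dv - (b - gp) <= 0)%R by lra.
apply: (small_pos _ _ S0) => t t0 t1.
have Hp : G p <= gp%:E by rewrite /gp fineK.
have Hz : G z <= b%:E by rewrite Gz.
have hc := cG p z gp b t Hp Hz ltac:(apply/andP; split; lra).
have hh := H ((1 - t) *: p + t *: z)%R.
have e : ((1 - t) *: p + t *: z - p = t *: (z - p))%R.
  by rewrite scalerBl scale1r scalerBr addrAC [(p - t *: p - p)%R]addrAC subrr add0r addrC.
rewrite e dotpZr sqnormZ -(fineK fp) in hh.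
have := le_trans hh hc; rewrite -EFinD lee_fin => h.
have : (t * (dv - t * S) <= t * (b - gp))%R.
  move: h; rewrite /dv /S /gp; set sq := sqnorm (z - p).
  have -> : (t ^+ 2 * sq / (2 * mu) = t * (t * (sq / (2 * mu))))%R.
    by rewrite !mulrA -expr2.
  lra.
rewrite ler_pM2l //; lra.
Qed.

Lemma conv_qlb g x1 (eta : R) : convex_efun g -> lower_semicontinuous g ->
  g x1 \is a fin_num -> (0 < eta)%R ->
  exists A : R, forall z, (A - eta * sqnorm (z - x1))%:E <= g z.
Proof.
move=> cg lg f1 e0; set g1 := fine (g x1).
have [W nW HW] := lg x1 (g1 - 1)%R ltac:(by rewrite -(fineK f1) lte_fin /g1; lra).
have [d d0 Hd] : exists2 d : R, (0 < d)%R &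
    forall w, (`|x1 - w| < d)%R -> (g1 - 1)%:E < g w.
  move: nW => /nbhs_ballP [d d0 sub]; exists d => // w hw; apply: HW; apply: sub.
  by rewrite -ball_normE.
set c := (2 / d)%R.
have c0 : (0 < c)%R by rewrite /c divr_gt0.
have key : forall z, ((g1 - 1) - c * `|z - x1|)%R%:E <= g z.
  move=> z; apply: le_from_reals => b hb.
  set m := (`|z - x1|)%R; have m0 : (0 <= m)%R by apply: normr_ge0.
  case: (ltP m d) => hz.
    have hz' : (`|x1 - z| < d)%R by rewrite -normrN opprB.
    have h := Hd z hz'.
    have := lt_le_trans h hb; rewrite lte_fin => h2.
    have : (0 <= c * m)%R by apply: mulr_ge0; lra.
    lra.
  have mpos : (0 < m)%R by lra.
  set t := (d / (2 * m))%R.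
  have t0 : (0 < t)%R by rewrite /t divr_gt0 //; lra.
  have t1 : (t <= 1)%R by rewrite /t ler_pdivrMr ?mul1r; lra.
  set w := ((1 - t) *: x1 + t *: z)%R.
  have ew : (x1 - w = t *: (x1 - z))%R.
    by apply/rowP => i; rewrite /w !mxE; ring.
  have nw : (`|x1 - w| < d)%R.
    rewrite ew normrZ ger0_norm ?ltW // -normrN opprB -/m /t.
    have -> : (t * m = d / 2)%R by rewrite /t; field; rewrite gt_eqF.
    lra.
  have hw := Hd w nw.
  have hc := cg x1 z g1 b t ltac:(by rewrite /g1 fineK) hb ltac:(apply/andP; split; lra).
  have := lt_le_trans hw hc; rewrite lte_fin => h.
  have ct : (c * m * t = 1)%R by rewrite /c /t; field; rewrite ?(gt_eqF d0) ?(gt_eqF mpos).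
  rewrite leNgt; apply/negP => hb2.
  have h3 : (b - g1 < -1 - c * m)%R by lra.
  have h4 : (t * (b - g1) < t * (-1 - c * m))%R by rewrite ltr_pM2l.
  have h5 : (t * (-1 - c * m) = - t - c * m * t)%R by ring.
  rewrite ct in h5.
  have h6 : ((1 - t) * g1 + t * b = g1 + t * (b - g1))%R by ring.
  lra.
exists (g1 - 1 - c ^+ 2 / (4 * eta))%R => z.
apply: le_trans (key z); rewrite lee_fin.
set m := (`|z - x1|)%R.
have hm := norm_sq_le (z - x1); rewrite -/m in hm.
have hq : (c * m <= eta * m ^+ 2 + c ^+ 2 / (4 * eta))%R.
  rewrite -(ler_pM2l (_ : 0 < 4 * eta)%R); last lra.
  have -> : (4 * eta * (eta * m ^+ 2 + c ^+ 2 / (4 * eta)) =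
     4 * eta ^+ 2 * m ^+ 2 + c ^+ 2)%R by field; lra.
  have := sqr_ge0 (2 * eta * m - c)%R; nra.
have := ler_wpM2l (ltW e0) hm; lra.
Qed.
End Conv.


Section Key.
Context {R : realType} {n : nat}.
Local Notation V := 'rV[R]_n.
Implicit Types (u w x y z : V) (f g : V -> \bar R).

Local Open Scope ereal_scope.

Lemma le_via_reals (X Y : \bar R) : (forall r : R, r%:E < X -> r%:E <= Y) -> X <= Y.
Proof.
move=> H; rewrite leNgt; apply/negP => hYX.
have [r [h1 h2]] : exists r : R, Y < r%:E /\ r%:E < X.
  clear H; move: hYX; case: Y => [y| |]; case: X => [x| |] //=.
  - by rewrite lte_fin => h; exists ((x + y) / 2)%R; rewrite !lte_fin; split; lra.
  - by move=> _; exists (y + 1)%R; rewrite lte_fin ltry; split => //; lra.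
  - by move=> _; exists (x - 1)%R; rewrite lte_fin ltNyr; split => //; lra.
  - by move=> _; exists 0%R; rewrite ltry ltNyr.
by have := H r h2; rewrite leNgt h1.
Qed.

Lemma min_subgrad G x p (mu : R) : (0 < mu)%R ->
  (forall z, G p + (qpen mu x p)%:E <= G z + (qpen mu x z)%:E) ->
  forall z, G p + (dotp (mu^-1 *: (x - p)) (z - p) - sqnorm (z - p) / (2 * mu))%:E <= G z.
Proof.
move=> m0 H z; have := H z; rewrite eadd_real_le.
have -> : (sqnorm (z - p) / (2 * mu) = qpen mu p z)%R by [].
by rewrite qpen_ident // gt_eqF.
Qed.

Lemma max0_convex g : convex_efun g -> convex_efun (fun z => Order.max (g z) 0).
Proof.
move=> cg x y a b t; rewrite !ge_max => /andP[ha a0] /andP[hb b0] ht.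
rewrite (cg x y a b t ha hb ht) /= lee_fin.
move: a0 b0 ht; rewrite !lee_fin => a0 b0 /andP[t0 t1].
by apply: addr_ge0; apply: mulr_ge0 => //; lra.
Qed.

Lemma max0_lsc g : lower_semicontinuous g ->
  lower_semicontinuous (fun z => Order.max (g z) 0).
Proof.
move=> lg x a; rewrite lt_max => /orP[h|h].
  have [W nW HW] := lg x a h; exists W => // y /HW hy.
  by rewrite lt_max hy.
exists setT; first exact: filterT.
by move=> y _; rewrite lt_max h orbT.
Qed.

Lemma keyA (lam : R) f g x x1 (r : R) : (0 < lam)%R -> convex_efun g ->
  lower_semicontinuous g -> (forall z, g z <= f z) -> g x1 \is a fin_num ->
  r%:E < g x -> r%:E <= hfun lam f x.
Proof.
move=> l0 cg lg gf f1 hr.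
have [A1 HA1] := @conv_qlb _ _ g x1 1%R cg lg f1 (@ltr01 R).
have [A HA] := @qlb_shift _ _ g A1 1%R 2%R x1 x (@ltr01 R) ltac:(lra) HA1.
have gN : forall z, g z != -oo.
  by move=> z; rewrite -ltNye; apply: lt_le_trans (HA z); rewrite ltNyr.
have [W nW HW] := lg x r hr.
have [d d0 Hd] : exists2 d : R, (0 < d)%R &
    forall w, (sqnorm (w - x) < d ^+ 2)%R -> r%:E < g w.
  move: nW => /nbhs_ballP [d d0 sub]; exists d => // w hw; apply: HW; apply: sub.
  rewrite -ball_normE /=.
  have h1 := norm_sq_le (x - w).
  have h2 : sqnorm (x - w) = sqnorm (w - x) by rewrite -sqnormN opprB.
  have h3 := normr_ge0 (x - w)%R.
  have d0' : (0 < d)%R := d0.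
  rewrite ltNge; apply/negP => h4; nra.
set K := ((2 * lam)^-1 + 3 + `|r - A| / d ^+ 2)%R.
have il0 : (0 < (2 * lam)^-1)%R by rewrite invr_gt0; lra.
have rA0 : (0 <= `|r - A| / d ^+ 2)%R by rewrite divr_ge0 // sqr_ge0.
have K0 : (0 < K)%R by rewrite /K; lra.
set mu := ((2 * K)^-1)%R.
have m0 : (0 < mu)%R by rewrite /mu invr_gt0; lra.
have hK : ((2 * mu)^-1 = K)%R by rewrite /mu; field; rewrite gt_eqF.
have mul : (mu <= lam)%R.
  rewrite /mu -[X in (_ <= X)%R]invrK lef_pV2 ?posrE ?invr_gt0 //; last lra.
  have -> : (lam^-1 = 2 * (2 * lam)^-1)%R by field; rewrite gt_eqF.
  rewrite /K; lra.
have gx1 : g x1 < +oo by move: f1; rewrite fin_numE => /andP[_]; rewrite ltey.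
have [p Hp] := exists_min g x mu A 2%R m0 ltac:(rewrite hK /K; lra) lg
  (ex_intro _ x1 gx1) HA.
have qmE : forall z, (qpen mu x z = sqnorm (z - x) * K)%R.
  by move=> z; rewrite /qpen -hK.
have rphi : r%:E <= g p + (qpen mu x p)%:E.
  case: (ltP (sqnorm (p - x)%R) (d ^+ 2)%R) => hp.
    apply: le_trans (ltW (Hd p hp)) _; apply: leeDl.
    by rewrite lee_fin qmE mulr_ge0 ?sqnorm_ge0 // ltW.
  apply: le_trans (leeD2r _ (HA p)); rewrite -EFinD lee_fin qmE.
  have h1 : ((K - 2) * d ^+ 2 <= (K - 2) * sqnorm (p - x))%R.
    by rewrite ler_wpM2l //; rewrite /K; lra.
  have h2 : ((K - 2) * d ^+ 2 = ((2 * lam)^-1 + 1) * d ^+ 2 + `|r - A|)%R.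
    by rewrite /K; field; rewrite (gt_eqF d0) (gt_eqF l0).
  have h3 : (0 <= ((2 * lam)^-1 + 1) * d ^+ 2)%R by rewrite mulr_ge0 ?sqr_ge0 //; lra.
  have h4 : (r - A <= `|r - A|)%R by apply: ler_norm.
  have -> : (A - 2 * sqnorm (p - x) + sqnorm (p - x) * K =
     A + (K - 2) * sqnorm (p - x))%R by ring.
  lra.
have gpfin : g p \is a fin_num.
  rewrite fin_numE gN /= -ltey.
  have h := le_lt_trans (Hp x1) (lte_add_pinfty gx1 (ltry _)).
  case Gp: (g p) h => [gp| |] h; [exact: ltry | | by move: (gN p); rewrite Gp].
  by move: h; rewrite addye // ltxx.
set v := (mu^-1 *: (x - p))%R.
have sg := @min_subgrad g x p mu m0 Hp.
have up := @conv_upgrade _ _ g p v mu m0 cg gpfin gN sg.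
set gp := fine (g p); set s := sqnorm v.
have s0 : (0 <= s)%R by apply: sqnorm_ge0.
set y := (p + lam *: v)%R.
have hmenv : (gp + lam / 2 * s)%:E <= menv lam f y.
  apply: menv_ge => z.
  apply: le_trans (leeD2r _ (gf z)).
  apply: le_trans (leeD2r _ (up z)).
  rewrite -(fineK gpfin) -!EFinD lee_fin -/gp.
  have -> : (qpen lam y z = sqnorm (z - p) / (2 * lam) - dotp v (z - p) + lam / 2 * s)%R.
    rewrite /qpen.
    have -> : (z - y = (z - p) + (- (lam *: v)))%R by rewrite /y opprD addrA.
    rewrite sqnormD sqnormN sqnormZ dotpNr dotpZr (dotpC (z - p) v) -/s.
    by field; rewrite gt_eqF.
  have : (0 <= sqnorm (z - p) / (2 * lam))%R.
    by rewrite divr_ge0 ?sqnorm_ge0 //; lra.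
  lra.
have hx : (x = p + mu *: v)%R.
  by apply/rowP => i; rewrite /v !mxE; field; rewrite gt_eqF.
have qxy : qpen lam x y = ((lam - mu) ^+ 2 * s / (2 * lam))%R.
  rewrite /qpen.
  have -> : (y - x = (lam - mu) *: v)%R.
    by rewrite /y hx; apply/rowP => i; rewrite !mxE; ring.
  by rewrite sqnormZ.
have qxp : qpen mu x p = (mu / 2 * s)%R.
  rewrite /qpen.
  have -> : (p - x = (- mu) *: v)%R.
    by rewrite hx; apply/rowP => i; rewrite !mxE; ring.
  by rewrite sqnormZ sqrrN -/s; field; rewrite gt_eqF.
have hh := hfun_ge lam f x y.
apply: le_trans rphi _; rewrite qxp -(fineK gpfin) -EFinD.
apply: le_trans _ hh.
apply: le_trans _ (leeD2r _ hmenv).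
rewrite -EFinB lee_fin qxy -/gp.
have E : (lam / 2 * s - (lam - mu) ^+ 2 * s / (2 * lam) - mu / 2 * s =
   s * mu * (lam - mu) / (2 * lam))%R by field; rewrite gt_eqF.
have : (0 <= s * mu * (lam - mu) / (2 * lam))%R.
  apply: divr_ge0; last lra.
  by apply: mulr_ge0; [apply: mulr_ge0 => //; lra | lra].
lra.
Qed.

Lemma keyB (lam lam' A0 : R) x0 f g x (r : R) : (0 < lam)%R -> (lam < lam')%R ->
  (forall z, (A0 - (2 * lam')^-1 * sqnorm (z - x0))%:E <= f z) -> proper_fun f ->
  convex_efun g -> lower_semicontinuous g -> (forall z, g z <= f z) ->
  (forall x1, g x1 \isn't a fin_num) -> r%:E < g x -> r%:E <= hfun lam f x.
Proof.
move=> l0 ll fq [fN [xf fxf]] cg lg gf nof hr.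
have gx : g x = +oo.
  move: (nof x); rewrite fin_numEn => /orP[/eqP h|/eqP h] //.
  by rewrite h ltNge leNye in hr.
have domf : forall z, f z < +oo -> g z = -oo.
  move=> z fz; move: (nof z); rewrite fin_numEn => /orP[/eqP //|/eqP h].
  by have := le_lt_trans (gf z) fz; rewrite h ltxx.
set Gm := fun z => Order.max (g z) 0.
have cG := max0_convex g cg; have lG := max0_lsc g lg.
have G0 : forall z, 0 <= Gm z by move=> z; rewrite /Gm le_max lexx orbT.
have Glb : forall z, ((0 - 0 * sqnorm (z - x))%R)%:E <= Gm z.
  by move=> z; rewrite mul0r subr0; exact: G0.
have Gxf : Gm xf = 0 by rewrite /Gm domf // max_r ?leNye.
have Gxf' : Gm xf < +oo by rewrite Gxf ltry.
have [p Hp] := exists_min Gm x 1%R 0%R 0%R ltr01 ltac:(rewrite mulr1 invr_gt0; lra)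
  lG (ex_intro _ xf Gxf') Glb.
have GN : forall z, Gm z != -oo.
  by move=> z; rewrite -ltNye; apply: lt_le_trans (G0 z); rewrite ltNyr.
have Gpfin : Gm p \is a fin_num.
  rewrite fin_numE GN /= -ltey.
  have h := le_lt_trans (Hp xf) (lte_add_pinfty Gxf' (ltry _)).
  case Gp: (Gm p) h => [gp| |] h; [exact: ltry | | by move: (GN p); rewrite Gp].
  by move: h; rewrite addye // ltxx.
have gp : g p = -oo.
  move: (nof p); rewrite fin_numEn => /orP[/eqP //|/eqP h].
  by move: Gpfin; rewrite /Gm h max_l ?leey.
have Gp0 : Gm p = 0 by rewrite /Gm gp max_r ?leNye.
set v := ((1%R)^-1 *: (x - p))%R.
have sg := @min_subgrad Gm x p 1%R ltr01 Hp.
have up := @conv_upgrade _ _ Gm p v 1%R ltr01 cG Gpfin GN sg.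
have hdom : forall z, f z < +oo -> (dotp v (z - p) <= 0)%R.
  move=> z fz; have := up z.
  by rewrite Gp0 /Gm domf // max_r ?leNye // add0e lee_fin.
have vE : v = (x - p)%R by rewrite /v invr1 scale1r.
set s := sqnorm v.
have s0 : (0 < s)%R.
  rewrite lt_neqAle sqnorm_ge0 andbT eq_sym; apply/eqP => /sqnorm_eq0 v0.
  have xp : x = p by apply/eqP; rewrite -subr_eq0 -vE v0.
  by move: Gp0; rewrite -xp /Gm gx max_l ?leey.
have e0 : (0 < (2 * lam')^-1)%R by rewrite invr_gt0; lra.
have ee : ((2 * lam')^-1 < (2 * lam)^-1)%R by rewrite ltf_pV2 ?posrE; lra.
have [A1 HA1] := @qlb_shift _ _ f A0 ((2 * lam')^-1) ((2 * lam)^-1) x0 p e0 ee fq.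
set t := (`|r - A1| * (2 * lam) / s + 1)%R.
have t1 : (1 <= t)%R.
  rewrite /t lerDr; apply: divr_ge0; last lra.
  by apply: mulr_ge0 => //; lra.
set y := (p + t *: v)%R.
have hmenv : ((A1 + t ^+ 2 * s / (2 * lam))%R)%:E <= menv lam f y.
  apply: menv_ge => z.
  case fz: (f z) => [b| |]; last by move: (fN z); rewrite fz.
    have dz := hdom z ltac:(by rewrite fz ltry).
    have hb := HA1 z; rewrite fz lee_fin in hb.
    rewrite -EFinD lee_fin.
    have -> : (qpen lam y z = (sqnorm (z - p) - 2 * t * dotp v (z - p) + t ^+ 2 * s) / (2 * lam))%R.
      rewrite /qpen.
      have -> : (z - y = (z - p) + (- (t *: v)))%R by rewrite /y opprD addrA.
      rewrite sqnormD sqnormN sqnormZ dotpNr dotpZr (dotpC (z - p) v) -/s.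
      ring.
    set sq := sqnorm (z - p); set d := dotp v (z - p).
    have key : (A1 + t ^+ 2 * s / (2 * lam) <=
       (A1 - (2 * lam)^-1 * sq) + (sq - 2 * t * d + t ^+ 2 * s) / (2 * lam))%R.
      rewrite -subr_ge0.
      have -> : (A1 - (2 * lam)^-1 * sq + (sq - 2 * t * d + t ^+ 2 * s) / (2 * lam) -
         (A1 + t ^+ 2 * s / (2 * lam)) = (- 2 * t * d) / (2 * lam))%R.
        by field; rewrite gt_eqF.
      apply: divr_ge0; last lra.
      have -> : (- 2 * t * d = 2 * (t * - d))%R by ring.
      by apply: mulr_ge0 => //; apply: mulr_ge0; [exact: le_trans ler01 t1 | rewrite oppr_ge0].
    by apply: (le_trans key); rewrite lerD2r.
  by rewrite addye // leey.
have qxy : qpen lam x y = ((t - 1) ^+ 2 * s / (2 * lam))%R.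
  rewrite /qpen.
  have -> : (y - x = (t - 1) *: v)%R.
    by rewrite /y vE; apply/rowP => i; rewrite !mxE; ring.
  by rewrite sqnormZ.
have hh := hfun_ge lam f x y.
apply: le_trans _ hh; apply: le_trans _ (leeD2r _ hmenv).
rewrite -EFinB lee_fin qxy.
have E : (A1 + t ^+ 2 * s / (2 * lam) - (t - 1) ^+ 2 * s / (2 * lam) =
   A1 + 2 * `|r - A1| + s / (2 * lam))%R.
  by rewrite /t; field; rewrite !gt_eqF.
have : (0 <= s / (2 * lam))%R by apply: divr_ge0; lra.
have := ler_norm (r - A1)%R.
rewrite E; have := normr_ge0 (r - A1)%R; lra.
Qed.
End Key.


Section Fin.
Context {R : realType} {n : nat}.
Local Notation V := 'rV[R]_n.
Implicit Types (u w x y z : V) (f g : V -> \bar R).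

Local Open Scope ereal_scope.

Lemma key_lemma (lam lam' A0 : R) x0 f g : (0 < lam)%R -> (lam < lam')%R ->
  (forall z, (A0 - (2 * lam')^-1 * sqnorm (z - x0))%:E <= f z) -> proper_fun f ->
  convex_efun g -> lower_semicontinuous g -> (forall z, g z <= f z) ->
  forall x, g x <= hfun lam f x.
Proof.
move=> l0 ll fq pf cg lg gf x; apply: le_via_reals => r hr.
have [[x1 f1]|nof] := pselect (exists x1, g x1 \is a fin_num).
  exact: (@keyA _ _ lam f g x x1 r l0 cg lg gf f1 hr).
apply: (@keyB _ _ lam lam' A0 x0 f g x r l0 ll fq pf cg lg gf _ hr) => x1; apply/negP => h; apply: nof.
by exists x1.
Qed.

Lemma lee_subr_real (X : \bar R) (a c : R) : (X - c%:E <= a%:E) = (X <= (a + c)%:E).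
Proof.
case: X => [x| |]; first by rewrite -EFinB !lee_fin lerBlDr.
  by rewrite addye // !leye_eq.
by rewrite addNye !leNye.
Qed.
Lemma lte_subr_real (X : \bar R) (a c : R) : (a%:E < X - c%:E) = ((a + c)%:E < X).
Proof.
case: X => [x| |]; first by rewrite -EFinB !lte_fin ltrBrDr.
  by rewrite addye // !ltry.
by rewrite addNye !ltNge !leNye.
Qed.

Lemma conv_sub g (c : R) : convex_efun g -> convex_efun (fun z => g z - c%:E).
Proof.
move=> cg x y a b t ha hb ht; rewrite lee_subr_real in ha; rewrite lee_subr_real in hb.
rewrite lee_subr_real; apply: le_trans (cg x y _ _ t ha hb ht) _.
rewrite lee_fin; lra.
Qed.

Lemma lsc_sub g (c : R) : lower_semicontinuous g ->
  lower_semicontinuous (fun z => g z - c%:E).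
Proof.
move=> lg x a; rewrite lte_subr_real => h.
have [W nW HW] := lg x _ h; exists W => // y /HW; by rewrite lte_subr_real.
Qed.

Lemma cconv_le (lam lam' A0 : R) x0 f1 f2 (c : R) : (0 < lam)%R -> (lam < lam')%R ->
  (forall z, (A0 - (2 * lam')^-1 * sqnorm (z - x0))%:E <= f1 z) -> proper_fun f1 ->
  (forall x, hfun lam f1 x = hfun lam f2 x + c%:E) ->
  forall x, cconvhull f1 x <= cconvhull f2 x + c%:E.
Proof.
move=> l0 ll fq pf Hh x.
apply: ge_ereal_sup => _ [g [cg [lg gf]] <-].
have gc : g x - c%:E <= cconvhull f2 x.
  apply: ereal_sup_ubound; exists (fun z => g z - c%:E) => //.
  split; first exact: conv_sub.
  split; first exact: lsc_sub.
  move=> z; have := key_lemma lam lam' A0 x0 f1 g l0 ll fq pf cg lg gf z.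
  rewrite Hh => h; rewrite -(adde_addK (f2 z) c).
  have := leeD2r (- c%:E) (le_trans h (leeD2r c%:E (hfun_le lam f2 z))).
  done.
by rewrite -(adde_subK (g x) c); apply: leeD2r.
Qed.
End Fin.


Theorem mainTheorem11 (R : realType) (n : nat) (f1 f2 : 'rV[R]_n -> \bar R)
  (lam : R) :
  proper_fun f1 -> proper_fun f2 ->
  lower_semicontinuous f1 -> lower_semicontinuous f2 ->
  prox_bounded f1 -> prox_bounded f2 ->
  (0 < prox_threshold f1)%E -> (0 < prox_threshold f2)%E ->
  0 < lam -> (lam%:E < prox_threshold f1)%E -> (lam%:E < prox_threshold f2)%E ->
  let A := forall x, psubdiff lam f1 x = psubdiff lam f2 x in
  let B := forall x, prox lam f1 x = prox lam f2 x in
  let C := exists c : R, forall x, menv lam f1 x = (menv lam f2 x + c%:E)%E in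
  let D := exists c : R, forall x, hfun lam f1 x = (hfun lam f2 x + c%:E)%E in
  let E := proper_fun (convhull f1) -> proper_fun (convhull f2) ->
           exists c : R, forall x, cconvhull f1 x = (cconvhull f2 x + c%:E)%E in
  (A <-> B) /\ (B -> C) /\ (C <-> D) /\ (A -> E).
Proof.
move=> p1 p2 l1 l2 _ _ _ _ l0 lt1 lt2 A B C D E.
have fN1 := proj1 p1; have fN2 := proj1 p2.
have AB : A <-> B := A_iff_B lam f1 f2 l0 fN1 fN2.
have BC : B -> C.
  by move=> HB; exact: (BtoC lam f1 f2 l0 fN1 fN2 (prox_ne lam f1 l0 l1 p1 lt1) HB).
have CD : C <-> D.
  split => [[c Hc]|[c Hc]]; exists c; [exact: (C_to_D lam f1 f2 c Hc) | exact: (D_to_C lam f1 f2 c Hc)].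
split => //; split => //; split => //.
move=> HA _ _.
have [c Hc] := BC (proj1 AB HA).
have Hh := C_to_D lam f1 f2 c Hc.
have Hh' : forall x, hfun lam f2 x = (hfun lam f1 x + (- c)%:E)%E.
  by move=> x; rewrite Hh EFinN adde_addK.
have [l1' [A1 [x1 [ll1 q1]]]] := thr_qlb lam f1 lt1 p1.
have [l2' [A2 [x2 [ll2 q2]]]] := thr_qlb lam f2 lt2 p2.
exists c => x; apply/eqP; rewrite eq_le; apply/andP; split.
  exact: (cconv_le lam l1' A1 x1 f1 f2 c l0 ll1 q1 p1 Hh x).
have h := cconv_le lam l2' A2 x2 f2 f1 (- c) l0 ll2 q2 p2 Hh' x.
by have := leeD2r c%:E h; rewrite EFinN adde_subK.
Qed.
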